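(* The fine transition function $\phi:\mathrm{Conf}\to\mathrm{Conf}$ is the left Kan extension of the fully shifted sub-local transition function $\underline{\delta}:\mathrm{Sub}\to\mathrm{Conf}$ along the (monotonic) projection $\pi_2:\mathrm{Sub}\to\mathrm{Conf}$, $\pi_2(g,c)=c$. That is, $\underline{\delta}\Rightarrow\phi\circ\pi_2$, and for every monotonic $f:\mathrm{Conf}\to\mathrm{Conf}$ with $\underline{\delta}\Rightarrow f\circ\pi_2$ we have $\phi\Rightarrow f$.
   Context: A cellular automaton is given by a group $G$, a neighborhood $N\subseteq G$ (not necessarily finite), a finite set of states $Q$ and $\delta:Q^N\to Q$. $\mathrm{Conf}$ is the set of partial functions $G\to Q$ with support $|c|$; $c\restriction S$ is restriction to $S\cap|c|$; $\mathrm{Conf}$ is partially ordered by $c\preceq c'$ iff for all $g\in|c|$, $g\in|c'|$ and $c(g)=c'(g)$. For $c\in\mathrm{Conf}$, $g\in G$, $c\blacktriangleleft g$ has support $\{h\mid g\cdot h\in|c|\}$ and $(c\blacktriangleleft g)(h)=c(g\cdot h)$. $g\cdot M=\{g\cdot m\mid m\in M\}$. $c_g=c\restriction(g\cdot N\cap|c|)$; $\det(c)=\{g\in G\mid \exists q\in Q\ \forall c'\in Q^{g\cdot N}:\ c'\restriction|c_g|=c_g\implies \delta(c'\blacktriangleleft g)=q\}$ and $q_{c,g}$ is the unique such $q$. The fine transition function $\phi$ has $|\phi(c)|=\det(c)$ and $\phi(c)(g)=q_{c,g}$. $\mathrm{Sub}=\bigcup_{g\in G,\,M\subseteq N}(\{g\}\times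 Q^{g\cdot M})$ ordered by $(g,c)\preceq(g',c')$ iff $g=g'$ and $c\preceq c'$; $\underline{\delta}(g,c)$ is the configuration with support $\{g\}\cap\det(c)$ and, if $g\in\det(c)$, value $q_{c,g}$ at $g$. For posets $X,Y$, $f:X\to Y$ is monotonic if $x\preceq x'\Rightarrow f(x)\preceq f(x')$; for monotonic $f,f'$, $f\Rightarrow f'$ iff $f(x)\preceq f'(x)$ for all $x$. Given posets $A,B,C$ and monotonic $i:A\to B$, $f:A\to C$, a monotonic $g:B\to C$ is the left Kan extension of $f$ along $i$ if it is the $\Rightarrow$-minimum of $\{h:B\to C\text{ monotonic}\mid f\Rightarrow h\circ i\}$. *)

(* Defs.v *)
From Stdlib Require Import ClassicalEpsilon.
From mathcomp Require Import all_boot.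

Set Implicit Arguments.
Unset Strict Implicit.
Unset Printing Implicit Defensive.

Definition monotone (X Y : Type) (leX : X -> X -> Prop) (leY : Y -> Y -> Prop)
  (f : X -> Y) : Prop := forall x x', leX x x' -> leY (f x) (f x').

Definition nat_le (X Y : Type) (leY : Y -> Y -> Prop) (f f' : X -> Y) : Prop :=
  forall x, leY (f x) (f' x).

Definition is_left_Kan_ext (A B C : Type)
  (leA : A -> A -> Prop) (leB : B -> B -> Prop) (leC : C -> C -> Prop)
  (i : A -> B) (f : A -> C) (g : B -> C) : Prop :=
  [/\ monotone leA leB i, monotone leA leC f,
      monotone leB leC g,
      nat_le leC f (fun a => g (i a)) &
      forall h : B -> C, monotone leB leC h -> nat_le leC f (fun a => h (i a)) ->
        nat_le leC g h].

Section CA.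
Variables (G : Type) (mul : G -> G -> G).
Variable (N : G -> Prop).
Variable (Q : finType).
Variable (delta : ({n : G | N n} -> Q) -> Q).

(* Conf: partial functions G -> Q; support = {g | c g <> None} *)
Definition Conf := G -> option Q.

Definition conf_le (c c' : Conf) : Prop :=
  forall g, c g <> None -> c' g = c g.

Definition translate (g : G) (M : G -> Prop) : G -> Prop :=
  fun x => exists m, M m /\ x = mul g m.

Definition gN (g : G) := translate g N.

Definition shift_pt (g : G) (n : {n : G | N n}) : {x : G | gN g x} :=
  exist (gN g) (mul g (proj1_sig n))
        (ex_intro _ (proj1_sig n) (conj (proj2_sig n) erefl)).

(* g in det(c) with q_{c,g} = q :
   for every c' in Q^{g.N} with c' restricted to |c_g| equal to c_g
   (c_g = c restricted to g.N /\ |c|), delta (c' <| g) = q. *)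
Definition det_val (c : Conf) (g : G) (q : Q) : Prop :=
  forall c' : {x : G | gN g x} -> Q,
    (forall x : {x : G | gN g x}, c (proj1_sig x) <> None ->
        c (proj1_sig x) = Some (c' x)) ->
    delta (fun n => c' (shift_pt g n)) = q.

Definition in_det (c : Conf) (g : G) : Prop := exists q, det_val c g q.

(* fine transition function: |phi c| = det(c), phi c g = q_{c,g} *)
Definition phi (c : Conf) : Conf := fun g =>
  epsilon (inhabits None) (fun o : option Q => forall q, o = Some q <-> det_val c g q).

(* Sub = U_{g in G, M subset N} {g} x Q^{g.M} *)
Definition is_sub (p : G * Conf) : Prop :=
  exists M : G -> Prop, (forall m, M m -> N m) /\
    forall x, p.2 x <> None <-> translate p.1 M x.

Definition Sub := {p : G * Conf | is_sub p}.

Definition sub_le (s s' : Sub) : Prop :=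
  (proj1_sig s).1 = (proj1_sig s').1 /\ conf_le (proj1_sig s).2 (proj1_sig s').2.

Definition pi2 (s : Sub) : Conf := (proj1_sig s).2.

(* fully shifted sub-local transition function: support {g} /\ det(c) *)
Definition sub_delta (s : Sub) : Conf := fun h =>
  if excluded_middle_informative (h = (proj1_sig s).1)
  then phi (proj1_sig s).2 h else None.

End CA.

(* Main.v *)
Require Import Defs.
From Stdlib Require Import ClassicalEpsilon.
From mathcomp Require Import all_boot.

Section Aux.
Variables (G : Type) (mul : G -> G -> G) (N : G -> Prop) (Q : finType)
  (delta : ({n : G | N n} -> Q) -> Q).

Lemma phi_spec (c : Conf G Q) g q :
  @phi G mul N Q delta c g = Some q <-> det_val mul delta c g q.
Proof.
unfold phi; revert q.
apply: (epsilon_spec (inhabits None)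
   (fun o : option Q => forall q0, o = Some q0 <-> det_val mul delta c g q0)).
destruct (classic (exists q0, det_val mul delta c g q0)) as [[q0 Hq0]|Hn].
- exists (Some q0) => q1; split.
  + by case=> <-.
  + move=> H1.
    pose c' := fun x : {x : G | gN mul N g x} =>
      match c (proj1_sig x) with Some a => a | None => q0 end.
    have Hc : forall x : {x : G | gN mul N g x}, c (proj1_sig x) <> None ->
        c (proj1_sig x) = Some (c' x).
      by move=> x; rewrite /c'; case: (c (proj1_sig x)).
    by rewrite -(Hq0 c' Hc) -(H1 c' Hc).
- exists None => q1; split; first by [].
  by move=> H; exfalso; apply: Hn; exists q1.
Qed.

Lemma det_val_mono (c c' : Conf G Q) g q :
  conf_le c c' -> det_val mul delta c g q -> det_val mul delta c' g q.
Proof.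
move=> Hle H c'' Hc''; apply: H => x Hx.
rewrite -(Hle _ Hx); apply: Hc''; by rewrite (Hle _ Hx).
Qed.

Lemma phi_mono : monotone (@conf_le G Q) (@conf_le G Q) (@phi G mul N Q delta).
Proof.
move=> c c' Hle g.
case E: (phi mul delta c g) => [q|] // _.
apply/phi_spec; exact: (det_val_mono c c' g q Hle (proj1 (phi_spec c g q) E)).
Qed.
End Aux.

Theorem mainTheorem16
  (G : Type) (mul : G -> G -> G) (one : G) (inv : G -> G)
  (mulA : forall x y z, mul x (mul y z) = mul (mul x y) z)
  (mul1g : forall x, mul one x = x)
  (mulVg : forall x, mul (inv x) x = one)
  (N : G -> Prop) (Q : finType) (delta : ({n : G | N n} -> Q) -> Q) :
  is_left_Kan_ext (@sub_le G mul N Q) (@conf_le G Q) (@conf_le G Q)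
    (@pi2 G mul N Q) (@sub_delta G mul N Q delta) (@phi G mul N Q delta).
Proof.
split.
- by move=> s s' [_ H].
- intros s s' Hss h; destruct Hss as [Eg Hle].
  rewrite /sub_delta -Eg.
  destruct (excluded_middle_informative (h = (proj1_sig s).1)); last by [].
  exact: (@phi_mono _ mul N Q delta _ _ Hle).
- exact: phi_mono.
- move=> s h; rewrite /sub_delta /pi2.
  by destruct (excluded_middle_informative (h = (proj1_sig s).1)).
- move=> f Hf Hsub c g.
  case E: (phi mul delta c g) => [q|] // _.
  move/phi_spec: E => Hdet.
  pose cg : Conf G Q := fun x =>
    if excluded_middle_informative (gN mul N g x) then c x else None.
  have Hin : forall x, gN mul N g x -> cg x = c x.
    by move=> x Hx; rewrite /cg; case: (excluded_middle_informative _).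
  have Hout : forall x, ~ gN mul N g x -> cg x = None.
    by move=> x Hx; rewrite /cg; case: (excluded_middle_informative _).
  have Hs : is_sub mul N (g, cg).
    exists (fun m => N m /\ c (mul g m) <> None); split; first by move=> m [].
    move=> x /=.
    case: (classic (gN mul N g x)) => Hx.
    + rewrite (Hin _ Hx); split.
      * move=> Hc; have [m [Hm Ex]] := Hx; exists m; split => //; split => //.
        by rewrite -Ex.
      * by move=> [m [[Hm Hc] ->]].
    + rewrite (Hout _ Hx); split; first by [].
      by move=> [m [[Hm Hc] Ex]]; exfalso; apply: Hx; exists m.
  pose s : Defs.Sub mul N Q := exist _ (g, cg) Hs.
  have Hdg : det_val mul delta cg g q.
    move=> c'' Hc''; apply: Hdet => x Hx.
    have Hx' := Hin _ (proj2_sig x).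
    rewrite -Hx'; apply: Hc''; by rewrite Hx'.
  have H1 : sub_delta delta s g = Some q.
    rewrite /sub_delta /=.
    destruct (excluded_middle_informative (g = g)) as [e|n]; last by case: n.
    exact/phi_spec.
  have H2 := Hsub s g; rewrite H1 /pi2 /= in H2.
  have H3 : f cg g = Some q by apply: H2.
  have Hle : conf_le cg c.
    move=> x; case: (classic (gN mul N g x)) => Hx.
    + by rewrite (Hin _ Hx).
    + by rewrite (Hout _ Hx).
  rewrite (Hf _ _ Hle g); first exact: H3.
  by rewrite H3.
Qed.
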